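(* If $\pi\in\mathcal A_n$ and $\sigma\in\mathcal A_m$, then $\pi[\sigma]\in\mathcal A_{n+m-1}$.
   Context: $\mathcal A_{n}$ is the set of permutations $w\in S_{n}$ (one-line notation $w_1\cdots w_n$) avoiding all six vincular patterns below, where $w$ contains - $\underline{32}\,\underline{41}$ if there are $i,j$ with $i+2\le j\le n-1$ and $w_{j+1}<w_{i+1}<w_i<w_j$; - $\underline{14}\,\underline{23}$ if there are such $i,j$ with $w_i<w_j<w_{j+1}<w_{i+1}$; - $\underline{41}\,\underline{32}$ if there are such $i,j$ with $w_{i+1}<w_{j+1}<w_j<w_i$; - $\underline{23}\,\underline{14}$ if there are such $i,j$ with $w_j<w_i<w_{i+1}<w_{j+1}$; - $\underline{23}\,\underline{1}$ if there is $i$ with $i+1\le n-1$ and $w_n<w_i<w_{i+1}$; - $\underline{1}\,\underline{32}$ if there is $j$ with $2\le j\le n-1$ and $w_1<w_{j+1}<w_j$. Inflation at $1$: for $\pi\in S_n$ with $\pi_r=1$ and $\sigma=\sigma_1\cdots\sigma_m\in S_m$, $\pi[\sigma]\in S_{n+m-1}$ is the permutation obtained by replacing the entry $1$ of $\pi$ by the block $\sigma_1\cdots\sigma_m$ and adding $m-1$ to every other entry: $\pi[\sigma]=(\pi_1+m-1)\cdots(\pi_{r-1}+m-1)\,\sigma_1\cdots\sigma_m\,(\pi_{r+1}+m-1)\cdots(\pi_n+m-1)$. E.g. $213[1342]=513426$. *)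

(* Defs.v *)
From mathcomp Require Import all_boot.
Set Implicit Arguments. Unset Strict Implicit. Unset Printing Implicit Defensive.

(* A permutation w in S_n is represented in one-line notation as a sequence
   w = [:: w_1; ...; w_n] of naturals which is a rearrangement of 1..n. *)
Definition is_perm (n : nat) (w : seq nat) : Prop := perm_eq w (iota 1 n).

(* 1-indexed access: entry w i is w_i (for 1 <= i <= size w). *)
Definition ent (w : seq nat) (i : nat) : nat := nth 0 w i.-1.

Definition contains_3241 (w : seq nat) : Prop :=
  exists i j, [/\ 1 <= i, i + 2 <= j, j <= (size w).-1 &
    [/\ ent w j.+1 < ent w i.+1, ent w i.+1 < ent w i & ent w i < ent w j]].
Definition contains_1423 (w : seq nat) : Prop :=
  exists i j, [/\ 1 <= i, i + 2 <= j, j <= (size w).-1 &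
    [/\ ent w i < ent w j, ent w j < ent w j.+1 & ent w j.+1 < ent w i.+1]].
Definition contains_4132 (w : seq nat) : Prop :=
  exists i j, [/\ 1 <= i, i + 2 <= j, j <= (size w).-1 &
    [/\ ent w i.+1 < ent w j.+1, ent w j.+1 < ent w j & ent w j < ent w i]].
Definition contains_2314 (w : seq nat) : Prop :=
  exists i j, [/\ 1 <= i, i + 2 <= j, j <= (size w).-1 &
    [/\ ent w j < ent w i, ent w i < ent w i.+1 & ent w i.+1 < ent w j.+1]].
(* w contains 23-1 (the 1 being the last entry w_n) *)
Definition contains_231 (w : seq nat) : Prop :=
  exists i, [/\ 1 <= i, i.+1 <= (size w).-1 &
    ent w (size w) < ent w i /\ ent w i < ent w i.+1].
(* w contains 1-32 (the 1 being the first entry w_1) *)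
Definition contains_132 (w : seq nat) : Prop :=
  exists j, [/\ 2 <= j, j <= (size w).-1 &
    ent w 1 < ent w j.+1 /\ ent w j.+1 < ent w j].

Definition inA (n : nat) (w : seq nat) : Prop :=
  is_perm n w /\ ~ contains_3241 w /\ ~ contains_1423 w /\ ~ contains_4132 w /\
  ~ contains_2314 w /\ ~ contains_231 w /\ ~ contains_132 w.

Definition inflate (pi sigma : seq nat) : seq nat :=
  flatten [seq if x == 1 then sigma else [:: x + (size sigma).-1] | x <- pi].

(* Main.v *)
Require Import Defs.
From mathcomp Require Import all_boot zify.
Set Implicit Arguments. Unset Strict Implicit. Unset Printing Implicit Defensive.

Definition W (p1 sigma p2 : seq nat) (c : nat) :=
  [seq x + c | x <- p1] ++ sigma ++ [seq x + c | x <- p2].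

Definition fpos (a m k : nat) := if k <= a then k else if k <= a + m then a.+1 else k + 1 - m.

Lemma flat_map1 (s sigma : seq nat) c : all (fun x => x != 1) s ->
  flatten [seq if x == 1 then sigma else [:: x + c] | x <- s] = [seq x + c | x <- s].
Proof.
elim: s => //= x s IH /andP [Hx Hs]; rewrite (negbTE Hx) /= IH //.
Qed.

Lemma region (p1 p2 sigma : seq nat) m k :
  size sigma = m ->
  all (fun x => 2 <= x) p1 -> all (fun x => 2 <= x) p2 ->
  all (fun x => (1 <= x) && (x <= m)) sigma ->
  1 <= k -> k <= size p1 + m + size p2 ->
  (k <= size p1 /\ fpos (size p1) m k = k /\
     ent (W p1 sigma p2 m.-1) k = ent (p1 ++ 1 :: p2) (fpos (size p1) m k) + m.-1 /\
     2 <= ent (p1 ++ 1 :: p2) (fpos (size p1) m k))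
  \/ (size p1 < k /\ k <= size p1 + m /\ fpos (size p1) m k = (size p1).+1 /\
     ent (W p1 sigma p2 m.-1) k = ent sigma (k - size p1) /\
     ent (p1 ++ 1 :: p2) (fpos (size p1) m k) = 1 /\
     1 <= ent sigma (k - size p1) /\ ent sigma (k - size p1) <= m)
  \/ (size p1 + m < k /\ fpos (size p1) m k = k + 1 - m /\
     ent (W p1 sigma p2 m.-1) k = ent (p1 ++ 1 :: p2) (fpos (size p1) m k) + m.-1 /\
     2 <= ent (p1 ++ 1 :: p2) (fpos (size p1) m k)).
Proof.
move=> Hs H1 H2 H3 Hk1 Hk2; rewrite /fpos /ent /W.
case: (leqP k (size p1)) => Ha.
  left; split => //; split => //.
  have Hlt : k.-1 < size p1 by lia.
  rewrite nth_cat size_map Hlt (nth_map 0) // nth_cat Hlt; split => //.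
  by move/allP: H1; apply; apply: mem_nth.
case: (leqP k (size p1 + m)) => Hb.
  right; left; do 3 split => //.
  have Hge : size p1 <= k.-1 by lia.
  have Hf : (k.-1 < size p1) = false by lia.
  rewrite nth_cat size_map Hf (nth_cat 0 sigma) Hs.
  have -> : k.-1 - size p1 < m by lia.
  have -> : (k - size p1).-1 = k.-1 - size p1 by lia.
  rewrite /= nth_cat ltnn subnn /=.
  have Hin : nth 0 sigma (k.-1 - size p1) \in sigma by apply: mem_nth; rewrite Hs; lia.
  move/allP: H3 => /(_ _ Hin) /andP [Ha1 Ha2].
  by do 3 split => //.
right; right; do 2 split => //.
have Hge : size p1 <= k.-1 by lia.
have Hf : (k.-1 < size p1) = false by lia.
rewrite nth_cat size_map Hf (nth_cat 0 sigma) Hs.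
have -> : k.-1 - size p1 < m = false by lia.
have Hlt : k.-1 - size p1 - m < size p2 by lia.
rewrite (nth_map 0) // nth_cat.
have -> : (k + 1 - m).-1 < size p1 = false by lia.
have -> : (k + 1 - m).-1 - size p1 = (k.-1 - size p1 - m).+1 by lia.
rewrite /=; split => //.
by move/allP: H2; apply; apply: mem_nth.
Qed.
Lemma permW p1 p2 sigma n m : 1 <= n -> 1 <= m ->
  perm_eq (p1 ++ 1 :: p2) (iota 1 n) -> perm_eq sigma (iota 1 m) ->
  perm_eq (W p1 sigma p2 m.-1) (iota 1 (n + m - 1)).
Proof.
move=> Hn Hm Pp Ps.
have E : n + m - 1 = m + n.-1 by lia.
rewrite E iotaD /W perm_catCA -map_cat.
apply: perm_cat => //.
have -> : 1 + m = m.-1 + 2 by lia.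
rewrite iotaDl.
have -> : [seq x + m.-1 | x <- p1 ++ p2] = map (addn m.-1) (p1 ++ p2).
  by apply: eq_map => x; rewrite addnC.
apply: perm_map.
have En : n = n.-1.+1 by lia.
move: Pp; rewrite En /= -cat1s perm_catCA /= perm_cons.
done.
Qed.

Lemma P3241 w : ~ contains_3241 w -> forall q1 q2 q3 q4, 1 <= q1 -> q2 = q1.+1 ->
  q1 + 2 <= q3 -> q4 = q3.+1 -> q3 <= (size w).-1 ->
  ent w q4 < ent w q2 -> ent w q2 < ent w q1 -> ent w q1 < ent w q3 -> False.
Proof. by move=> H q1 q2 q3 q4 h1 -> h3 -> h5 c1 c2 c3; apply: H; exists q1, q3. Qed.
Lemma P1423 w : ~ contains_1423 w -> forall q1 q2 q3 q4, 1 <= q1 -> q2 = q1.+1 ->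
  q1 + 2 <= q3 -> q4 = q3.+1 -> q3 <= (size w).-1 ->
  ent w q1 < ent w q3 -> ent w q3 < ent w q4 -> ent w q4 < ent w q2 -> False.
Proof. by move=> H q1 q2 q3 q4 h1 -> h3 -> h5 c1 c2 c3; apply: H; exists q1, q3. Qed.
Lemma P4132 w : ~ contains_4132 w -> forall q1 q2 q3 q4, 1 <= q1 -> q2 = q1.+1 ->
  q1 + 2 <= q3 -> q4 = q3.+1 -> q3 <= (size w).-1 ->
  ent w q2 < ent w q4 -> ent w q4 < ent w q3 -> ent w q3 < ent w q1 -> False.
Proof. by move=> H q1 q2 q3 q4 h1 -> h3 -> h5 c1 c2 c3; apply: H; exists q1, q3. Qed.
Lemma P2314 w : ~ contains_2314 w -> forall q1 q2 q3 q4, 1 <= q1 -> q2 = q1.+1 ->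
  q1 + 2 <= q3 -> q4 = q3.+1 -> q3 <= (size w).-1 ->
  ent w q3 < ent w q1 -> ent w q1 < ent w q2 -> ent w q2 < ent w q4 -> False.
Proof. by move=> H q1 q2 q3 q4 h1 -> h3 -> h5 c1 c2 c3; apply: H; exists q1, q3. Qed.
Lemma P231 w : ~ contains_231 w -> forall q1 q2 qN, 1 <= q1 -> q2 = q1.+1 ->
  q2 <= (size w).-1 -> qN = size w ->
  ent w qN < ent w q1 -> ent w q1 < ent w q2 -> False.
Proof. by move=> H q1 q2 qN h1 -> h3 -> c1 c2; apply: H; exists q1. Qed.
Lemma P132 w : ~ contains_132 w -> forall q1 q2 q3, q1 = 1 -> 2 <= q2 -> q3 = q2.+1 ->
  q2 <= (size w).-1 ->
  ent w q1 < ent w q3 -> ent w q3 < ent w q2 -> False.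
Proof. by move=> H q1 q2 q3 -> h2 -> h4 c1 c2; apply: H; exists q2. Qed.

Lemma decomp (pi : seq nat) : 1 \in pi -> exists p1 p2 : seq nat, pi = p1 ++ 1 :: p2.
Proof. by case/splitPr => p1 p2; exists p1, p2. Qed.

Ltac splitall := repeat match goal with
  | H : _ \/ _ |- _ => destruct H as [H|H]
  | H : _ /\ _ |- _ => destruct H end.

Ltac spR r := match type of r with ?A -> ?B -> _ =>
  let h1 := fresh in let h2 := fresh in
  idtac A "||" B; assert (h1 : A) by lia;
  assert (h2 : B) by lia;
  move: (r h1 h2) => {h1 h2}{}r end.

Theorem mainTheorem13 (n m : nat) (pi sigma : seq nat) :
  1 <= n -> 1 <= m -> inA n pi -> inA m sigma ->
  inA (n + m - 1) (inflate pi sigma).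
Proof.
move=> Hn Hm [Ppi [a1 [a2 [a3 [a4 [a5 a6]]]]]] [Psg [b1 [b2 [b3 [b4 [b5 b6]]]]]].
have Hin1 : 1 \in pi by rewrite (perm_mem Ppi) mem_iota; lia.
have Hu : uniq pi by rewrite (perm_uniq Ppi) iota_uniq.
have Hpi : forall x, x \in pi -> 1 <= x by move=> x; rewrite (perm_mem Ppi) mem_iota; lia.
have Hsz : size pi = n by rewrite (perm_size Ppi) size_iota.
have Hsg : size sigma = m by rewrite (perm_size Psg) size_iota.
have Hsgv : all (fun x => (1 <= x) && (x <= m)) sigma.
  by apply/allP => x; rewrite (perm_mem Psg) mem_iota; lia.
case: (decomp Hin1) => p1 [p2 E]; subst pi.
move: Hu; rewrite uniq_catC cat_cons cons_uniq mem_cat negb_or => /andP [/andP [Hn2 N1] _].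
have A1 : all (fun x => 2 <= x) p1.
  apply/allP => x Hx; have := Hpi x; rewrite mem_cat Hx => /(_ isT).
  move=> H; have : x != 1 by apply/eqP => E; rewrite -E Hx in N1.
  lia.
have A2 : all (fun x => 2 <= x) p2.
  apply/allP => x Hx; have := Hpi x; rewrite mem_cat in_cons Hx !orbT => /(_ isT).
  move=> H; have : x != 1 by apply/eqP => E; rewrite -E Hx in Hn2.
  lia.
have -> : inflate (p1 ++ 1 :: p2) sigma = W p1 sigma p2 m.-1.
  rewrite /inflate map_cat flatten_cat /= Hsg /W flat_map1; last first.
    by apply/allP => x Hx; apply/eqP => E; rewrite -E Hx in N1.
  rewrite flat_map1 //.
  by apply/allP => x Hx; apply/eqP => E; rewrite -E Hx in Hn2.
have SW : size (W p1 sigma p2 m.-1) = size p1 + m + size p2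
  by rewrite /W !size_cat !size_map Hsg addnA.
rewrite size_cat /= in Hsz.
have Hsz' : size (p1 ++ 1 :: p2) = n by rewrite size_cat.
split; first by apply: permW.
have R := fun k => @region p1 p2 sigma m k Hsg A1 A2 Hsgv.
clear Ppi Psg Hpi Hsgv A1 A2 N1 Hn2.
split.
  move=> [i [j [h1 h2 h3 [c1 c2 c3]]]].
  have ea1 : 0 < i by lia.
  have eb1 : i <= size p1 + m + size p2 by lia.
  have r1 := R (i) ea1 eb1.
  have ea2 : 0 < i.+1 by lia.
  have eb2 : i.+1 <= size p1 + m + size p2 by lia.
  have r2 := R (i.+1) ea2 eb2.
  have ea3 : 0 < j by lia.
  have eb3 : j <= size p1 + m + size p2 by lia.
  have r3 := R (j) ea3 eb3.
  have ea4 : 0 < j.+1 by lia.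
  have eb4 : j.+1 <= size p1 + m + size p2 by lia.
  have r4 := R (j.+1) ea4 eb4.
  clear R.
  splitall;
  first [ lia
        | apply: (@P3241 _ a1 (fpos (size p1) m i) (fpos (size p1) m i.+1) (fpos (size p1) m j) (fpos (size p1) m j.+1)); lia
        | apply: (@P3241 _ b1 (i - size p1) (i.+1 - size p1) (j - size p1) (j.+1 - size p1)); lia ].
split.
  move=> [i [j [h1 h2 h3 [c1 c2 c3]]]].
  have ea5 : 0 < i by lia.
  have eb5 : i <= size p1 + m + size p2 by lia.
  have r5 := R (i) ea5 eb5.
  have ea6 : 0 < i.+1 by lia.
  have eb6 : i.+1 <= size p1 + m + size p2 by lia.
  have r6 := R (i.+1) ea6 eb6.
  have ea7 : 0 < j by lia.
  have eb7 : j <= size p1 + m + size p2 by lia.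
  have r7 := R (j) ea7 eb7.
  have ea8 : 0 < j.+1 by lia.
  have eb8 : j.+1 <= size p1 + m + size p2 by lia.
  have r8 := R (j.+1) ea8 eb8.
  clear R.
  splitall;
  first [ lia
        | apply: (@P1423 _ a2 (fpos (size p1) m i) (fpos (size p1) m i.+1) (fpos (size p1) m j) (fpos (size p1) m j.+1)); lia
        | apply: (@P1423 _ b2 (i - size p1) (i.+1 - size p1) (j - size p1) (j.+1 - size p1)); lia ].
split.
  move=> [i [j [h1 h2 h3 [c1 c2 c3]]]].
  have ea9 : 0 < i by lia.
  have eb9 : i <= size p1 + m + size p2 by lia.
  have r9 := R (i) ea9 eb9.
  have ea10 : 0 < i.+1 by lia.
  have eb10 : i.+1 <= size p1 + m + size p2 by lia.
  have r10 := R (i.+1) ea10 eb10.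
  have ea11 : 0 < j by lia.
  have eb11 : j <= size p1 + m + size p2 by lia.
  have r11 := R (j) ea11 eb11.
  have ea12 : 0 < j.+1 by lia.
  have eb12 : j.+1 <= size p1 + m + size p2 by lia.
  have r12 := R (j.+1) ea12 eb12.
  clear R.
  splitall;
  first [ lia
        | apply: (@P4132 _ a3 (fpos (size p1) m i) (fpos (size p1) m i.+1) (fpos (size p1) m j) (fpos (size p1) m j.+1)); lia
        | apply: (@P4132 _ b3 (i - size p1) (i.+1 - size p1) (j - size p1) (j.+1 - size p1)); lia 
        | apply: (@P132 _ b6 (i.+1 - size p1) (j - size p1) (j.+1 - size p1)); lia ].
split.
  move=> [i [j [h1 h2 h3 [c1 c2 c3]]]].
  have ea13 : 0 < i by lia.
  have eb13 : i <= size p1 + m + size p2 by lia.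
  have r13 := R (i) ea13 eb13.
  have ea14 : 0 < i.+1 by lia.
  have eb14 : i.+1 <= size p1 + m + size p2 by lia.
  have r14 := R (i.+1) ea14 eb14.
  have ea15 : 0 < j by lia.
  have eb15 : j <= size p1 + m + size p2 by lia.
  have r15 := R (j) ea15 eb15.
  have ea16 : 0 < j.+1 by lia.
  have eb16 : j.+1 <= size p1 + m + size p2 by lia.
  have r16 := R (j.+1) ea16 eb16.
  clear R.
  splitall;
  first [ lia
        | apply: (@P2314 _ a4 (fpos (size p1) m i) (fpos (size p1) m i.+1) (fpos (size p1) m j) (fpos (size p1) m j.+1)); lia
        | apply: (@P2314 _ b4 (i - size p1) (i.+1 - size p1) (j - size p1) (j.+1 - size p1)); lia 
        | apply: (@P231 _ b5 (i - size p1) (i.+1 - size p1) (j - size p1)); lia ].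
split.
  move=> [i [h1 h2 [c1 c2]]].
  have ea17 : 0 < i by lia.
  have eb17 : i <= size p1 + m + size p2 by lia.
  have r17 := R (i) ea17 eb17.
  have ea18 : 0 < i.+1 by lia.
  have eb18 : i.+1 <= size p1 + m + size p2 by lia.
  have r18 := R (i.+1) ea18 eb18.
  have ea19 : 0 < size (W p1 sigma p2 m.-1) by lia.
  have eb19 : size (W p1 sigma p2 m.-1) <= size p1 + m + size p2 by lia.
  have r19 := R (size (W p1 sigma p2 m.-1)) ea19 eb19.
  clear R.
  splitall;
  first [ lia
        | apply: (@P231 _ a5 (fpos (size p1) m i) (fpos (size p1) m i.+1) (fpos (size p1) m (size (W p1 sigma p2 m.-1)))); lia
        | apply: (@P231 _ b5 (i - size p1) (i.+1 - size p1) (size (W p1 sigma p2 m.-1) - size p1)); lia ].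
move=> [j [h1 h2 [c1 c2]]].
have ea20 : 0 < 1 by lia.
have eb20 : 1 <= size p1 + m + size p2 by lia.
have r20 := R (1) ea20 eb20.
have ea21 : 0 < j by lia.
have eb21 : j <= size p1 + m + size p2 by lia.
have r21 := R (j) ea21 eb21.
have ea22 : 0 < j.+1 by lia.
have eb22 : j.+1 <= size p1 + m + size p2 by lia.
have r22 := R (j.+1) ea22 eb22.
clear R.
splitall;
first [ lia
      | apply: (@P132 _ a6 (fpos (size p1) m 1) (fpos (size p1) m j) (fpos (size p1) m j.+1)); lia
      | apply: (@P132 _ b6 (1 - size p1) (j - size p1) (j.+1 - size p1)); lia ].
Qed.
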